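(* Let $\mathcal H$ be a separable complex Hilbert space, $A\in L(\mathcal H)^+$ and $\mathcal S$ a closed subspace of $\mathcal H$. The pair $(A,\mathcal S)$ is compatible if and only if there exists an $A$-projection into $\mathcal S$.
   Context: $(A,\mathcal S)$ is compatible if there exists $Q\in L(\mathcal H)$ with $Q^2=Q$, $R(Q)=\mathcal S$ and $AQ=Q^*A$. With $\|z\|_A=\langle Az,z\rangle^{1/2}$, an $A$-projection into $\mathcal S$ is an operator $T\in L(\mathcal H)$ with $R(T)\subseteq\mathcal S$ and $\|y-Ty\|_A\le\|y-s\|_A$ for all $y\in\mathcal H$, $s\in\mathcal S$. *)

(* Defs.v *)
From HB Require Import structures.
From mathcomp Require Import all_boot all_order all_algebra.
From mathcomp Require Import reals complex.
Set Implicit Arguments. Unset Strict Implicit. Unset Printing Implicit Defensive.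
Import Order.TTheory GRing.Theory Num.Theory.
Local Open Scope ring_scope.

Section Hilbert.
Variables (R : realType) (H : lmodType R[i]) (ip : H -> H -> R[i]).

(* ip is a complex inner product: linear in the first argument,
   conjugate symmetric, positive definite (0 <= z in R[i] means z real >= 0) *)
Definition inner_product : Prop :=
  [/\ forall (a : R[i]) (x y z : H), ip (a *: x + y) z = a * ip x z + ip y z,
      forall x y : H, ip y x = (ip x y)^*,
      forall x : H, 0 <= ip x x
    & forall x : H, ip x x = 0 -> x = 0].

Definition hnorm (x : H) : R := Num.sqrt (complex.Re (ip x x)).

Definition seq_cvg_to (u : nat -> H) (x : H) : Prop :=
  forall e : R, 0 < e -> exists N : nat, forall n : nat, (N <= n)%N -> hnorm (u n - x) < e.

Definition cauchy_seq (u : nat -> H) : Prop :=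
  forall e : R, 0 < e -> exists N : nat, forall m n : nat,
    (N <= m)%N -> (N <= n)%N -> hnorm (u m - u n) < e.

Definition complete_space : Prop :=
  forall u : nat -> H, cauchy_seq u -> exists x : H, seq_cvg_to u x.

(* separable: there is a countable dense subset (H is nonempty, so a dense
   sequence) *)
Definition separable_space : Prop :=
  exists d : nat -> H, forall (x : H) (e : R), 0 < e -> exists n : nat, hnorm (x - d n) < e.

Definition separable_hilbert_space : Prop :=
  [/\ inner_product, complete_space & separable_space].

Definition bounded_op (T : H -> H) : Prop :=
  (forall (a : R[i]) (x y : H), T (a *: x + y) = a *: T x + T y) /\
  exists M : R, forall x : H, hnorm (T x) <= M * hnorm x.

Definition positive_op (A : H -> H) : Prop :=
  bounded_op A /\ forall x : H, 0 <= ip (A x) x.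

Definition closed_subspace (S : H -> Prop) : Prop :=
  [/\ S 0,
      forall x y, S x -> S y -> S (x + y),
      forall (a : R[i]) x, S x -> S (a *: x)
    & forall (u : nat -> H) (x : H), (forall n, S (u n)) -> seq_cvg_to u x -> S x].

Definition is_adjoint (T Ts : H -> H) : Prop :=
  forall x y : H, ip (T x) y = ip x (Ts y).

Definition compatible (A : H -> H) (S : H -> Prop) : Prop :=
  exists Q : H -> H,
    [/\ bounded_op Q,
        forall x, Q (Q x) = Q x,
        forall y, S y <-> exists x, Q x = y
      & exists Qs : H -> H,
          [/\ bounded_op Qs, is_adjoint Q Qs & forall x, A (Q x) = Qs (A x)]].

Definition A_seminorm (A : H -> H) (z : H) : R := Num.sqrt (complex.Re (ip (A z) z)).

Definition A_projection (A : H -> H) (S : H -> Prop) (T : H -> H) : Prop :=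
  [/\ bounded_op T,
      forall y, S (T y)
    & forall y s, S s -> A_seminorm A (y - T y) <= A_seminorm A (y - s)].

End Hilbert.

(* Main.v *)
Require Import Defs.
From HB Require Import structures.
From mathcomp Require Import all_boot all_order all_algebra.
From mathcomp Require Import reals complex.
From mathcomp Require Import ring lra.
From mathcomp Require Import boolp classical_sets.
Import Order.TTheory GRing.Theory Num.Theory.
Local Open Scope ring_scope.
Set Implicit Arguments. Unset Strict Implicit.

Local Open Scope complex_scope.
Local Open Scope ring_scope.

Section Basics.
Variable R : realType.
Implicit Types (z w : R[i]).

Lemma Cge0 z : 0 <= z -> z = (complex.Re z)%:C.
Proof. by case: z => a b; rewrite lecE /= => /andP[/eqP -> _]. Qed.

Lemma conjC_real (r : R) : (r%:C)^*%R = r%:C.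
Proof. by apply/eqP; rewrite eq_complex /= oppr0 !eqxx. Qed.

Lemma conj_ge0 z : 0 <= z -> z^*%R = z.
Proof. by move=> /Cge0 ->; exact: conjC_real. Qed.

Lemma realC_ge0 (r : R) : (0 <= r%:C) = (0 <= r).
Proof. by rewrite -lecR. Qed.

End Basics.

Section Form.
Variables (R : realType) (H : lmodType R[i]) (B : H -> H -> R[i]).
Hypothesis BD : forall (a : R[i]) (x y z : H), B (a *: x + y) z = a * B x z + B y z.
Hypothesis BC : forall x y : H, B y x = (B x y)^*%R.
Hypothesis Bpos : forall x : H, 0 <= B x x.

Lemma B0l y : B 0 y = 0.
Proof.
have h := BD 1 0 0 y; rewrite scaler0 addr0 mul1r in h.
by apply: (@addrI _ (B 0 y)); rewrite addr0 -h.
Qed.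

Lemma BDl x y z : B (x + y) z = B x z + B y z.
Proof. by have := BD 1 x y z; rewrite scale1r mul1r. Qed.

Lemma BZl a x z : B (a *: x) z = a * B x z.
Proof. by rewrite -[a *: x]addr0 BD B0l addr0. Qed.

Lemma BNl x z : B (- x) z = - B x z.
Proof. by rewrite -scaleN1r BZl mulN1r. Qed.

Lemma BBl x y z : B (x - y) z = B x z - B y z.
Proof. by rewrite BDl BNl. Qed.

Lemma BDr x y z : B x (y + z) = B x y + B x z.
Proof. by rewrite BC BDl rmorphD /= -!BC. Qed.

Lemma BZr a x z : B x (a *: z) = a^*%R * B x z.
Proof. by rewrite BC BZl rmorphM /= -BC. Qed.

Lemma B0r x : B x 0 = 0.
Proof. by rewrite BC B0l conjC0. Qed.

Lemma BNr x z : B x (- z) = - B x z.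
Proof. by rewrite BC BNl rmorphN /= -BC. Qed.

Lemma BBr x y z : B x (y - z) = B x y - B x z.
Proof. by rewrite BDr BNr. Qed.

Lemma Bxx_conj x : (B x x)^*%R = B x x.
Proof. exact: conj_ge0. Qed.

Lemma B_expand (z m : H) (c : R[i]) :
  B (z - c *: m) (z - c *: m) =
  B z z - c^*%R * B z m - c * (B z m)^*%R + c * c^*%R * B m m.
Proof.
rewrite BBl !BBr !BZl !BZr (BC z m).
move: (B z z) (B z m) (B m m) => p q r.
ring.
Qed.

Lemma variational (z m : H) :
  (forall c : R[i], complex.Re (B z z) <= complex.Re (B (z - c *: m) (z - c *: m))) ->
  B z m = 0.
Proof.
move=> h.
set b := B z m; set a := B m m.
have a0 : 0 <= a by exact: Bpos.
set t : R[i] := (1 + a)^-1.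
have a1 : 0 < 1 + a by rewrite ltr_wpDr.
have t0 : 0 < t by rewrite invr_gt0.
have tc : t^*%R = t by apply: conj_ge0; exact: ltW.
have ac : a^*%R = a by exact: conj_ge0.
have := h (t * b).
have hpos := Bpos (z - (t * b) *: m).
rewrite B_expand -/b -/a rmorphM /= tc in hpos.
rewrite B_expand -/b -/a rmorphM /= tc.
set X := B z z.
set Y := (X - _ - _ + _) in hpos *.
move=> hXY.
have hle : X <= Y.
  by rewrite [X]Cge0 ?Bpos // [Y]Cge0 ?lecR.
have eqD : Y - X = t * (b * b^*%R) * (t * a - 2).
  rewrite /Y; ring.
have ta : t * a < 1.
  by rewrite /t mulrC ltr_pdivrMr // mul1r ltrDr ltr01.
have bb0 : 0 <= b * b^*%R by rewrite -normCK exprn_ge0.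
have hneg : t * a - 2 < 0.
  rewrite subr_lt0; apply: (lt_trans ta); rewrite ltr1n //.
have : Y - X <= 0.
  rewrite eqD; apply: mulr_ge0_le0; first by rewrite mulr_ge0 // ltW.
  exact: ltW.
rewrite -(subr_ge0 X Y) in hle.
move=> hle2.
have /eqP : Y - X = 0 by apply/eqP; rewrite eq_le hle2 hle.
rewrite eqD !mulf_eq0 (gt_eqF t0) (lt_eqF hneg) /= orbF conjC_eq0 orbb.
by move/eqP.
Qed.

End Form.

Section IP.
Variables (R : realType) (H : lmodType R[i]) (ip : H -> H -> R[i]).
Hypothesis hip : inner_product ip.

Lemma ipD (a : R[i]) (x y z : H) : ip (a *: x + y) z = a * ip x z + ip y z.
Proof. by case: hip. Qed.
Lemma ipC (x y : H) : ip y x = (ip x y)^*%R.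
Proof. by case: hip. Qed.
Lemma ippos (x : H) : 0 <= ip x x.
Proof. by case: hip. Qed.
Lemma ipdef (x : H) : ip x x = 0 -> x = 0.
Proof. by case: hip => _ _ _; apply. Qed.

Definition nn (x : H) : R := complex.Re (ip x x).
Definition rabs (z : R[i]) : R := complex.Re `|z|.

Lemma rabsE z : `|z| = (rabs z)%:C.
Proof. exact: Cge0. Qed.
Lemma rabs_ge0 z : 0 <= rabs z.
Proof. by rewrite -realC_ge0 -rabsE. Qed.
Lemma rabs0 z : rabs z = 0 -> z = 0.
Proof. by move=> h; apply/eqP; rewrite -normr_eq0 rabsE h. Qed.
Lemma rabsD z w : rabs (z + w) <= rabs z + rabs w.
Proof. by rewrite -lecR rmorphD /= -!rabsE ler_normD. Qed.
Lemma rabsM z w : rabs (z * w) = rabs z * rabs w.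
Proof. by apply: complexI; rewrite rmorphM /= -!rabsE normrM. Qed.
Lemma rabsN z : rabs (- z) = rabs z.
Proof. by apply: complexI; rewrite -!rabsE normrN. Qed.
Lemma rabsJ z : rabs (z^*%R) = rabs z.
Proof. by apply: complexI; rewrite -!rabsE norm_conjC. Qed.
Lemma rabsR (r : R) : rabs r%:C = `|r|.
Proof.
apply: complexI; rewrite -rabsE.
have [r0|r0] := leP 0 r.
  by rewrite !ger0_norm // realC_ge0.
by rewrite !ltr0_norm ?ltcR // rmorphN.
Qed.

Lemma RC_sqr (r : R) : (r ^+ 2)%:C = (r%:C) ^+ 2.
Proof. by rewrite !expr2 rmorphM. Qed.

Lemma ipxx x : ip x x = (nn x)%:C.
Proof. exact: Cge0 (ippos x). Qed.
Lemma nn_ge0 x : 0 <= nn x.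
Proof. by rewrite -realC_ge0 -ipxx ippos. Qed.
Lemma nn_eq0 x : nn x = 0 -> x = 0.
Proof. by move=> h; apply: ipdef; rewrite ipxx h. Qed.
Lemma hnorm_ge0 x : 0 <= hnorm ip x.
Proof. exact: sqrtr_ge0. Qed.
Lemma hnorm_sq x : hnorm ip x ^+ 2 = nn x.
Proof. by rewrite /hnorm sqr_sqrtr // nn_ge0. Qed.



Lemma ip0l y : ip 0 y = 0. Proof. exact (B0l ipD y). Qed.
Lemma ipDl x y z : ip (x + y) z = ip x z + ip y z. Proof. exact (BDl ipD x y z). Qed.
Lemma ipZl a x z : ip (a *: x) z = a * ip x z. Proof. exact (BZl ipD a x z). Qed.
Lemma ipNl x z : ip (- x) z = - ip x z. Proof. exact (BNl ipD x z). Qed.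
Lemma ipBl x y z : ip (x - y) z = ip x z - ip y z. Proof. exact (BBl ipD x y z). Qed.
Lemma ipDr x y z : ip x (y + z) = ip x y + ip x z. Proof. exact (BDr ipD ipC x y z). Qed.
Lemma ipZr a x z : ip x (a *: z) = a^*%R * ip x z. Proof. exact (BZr ipD ipC a x z). Qed.
Lemma ip0r x : ip x 0 = 0. Proof. exact (B0r ipD ipC x). Qed.
Lemma ipNr x z : ip x (- z) = - ip x z. Proof. exact (BNr ipD ipC x z). Qed.
Lemma ipBr x y z : ip x (y - z) = ip x y - ip x z. Proof. exact (BBr ipD ipC x y z). Qed.

Lemma hnorm0 : hnorm ip 0 = 0.
Proof. by rewrite /hnorm ip0l /= sqrtr0. Qed.

Lemma CS x y : rabs (ip x y) <= hnorm ip x * hnorm ip y.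
Proof.
have [y0|yn0] := eqVneq (ip y y) 0.
  rewrite (ipdef y0) ip0r.
  have -> : rabs 0 = 0 by apply: complexI; rewrite -rabsE normr0.
  by rewrite mulr_ge0 // hnorm_ge0.
set p := ip x y; set w := ip y y.
have w0 : 0 < w by rewrite lt_def yn0 ippos.
have wc : w^*%R = w by apply: conj_ge0; exact: ippos.
set c := p / w.
have h := ippos (x - c *: y).
rewrite (B_expand ipD ipC) -/p -/w in h.
have e : ip x x - c^*%R * p - c * p^*%R + c * c^*%R * w = ip x x - p * p^*%R / w.
  rewrite /c rmorphM /= fmorphV /= wc; field.
  by rewrite gt_eqF.
rewrite e subr_ge0 ler_pdivrMr // in h.
rewrite -(ler_pXn2r (_ : 0 < 2)%N) ?nnegrE ?rabs_ge0 ?mulr_ge0 ?hnorm_ge0 //.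
rewrite -lecR !rmorphXn /= -rabsE normCK rmorphM /= exprMn -!rmorphXn /= !hnorm_sq -!ipxx.
exact: h.
Qed.

Lemma ip_le_norm (p : R[i]) : p + p^*%R <= 2 * `|p|.
Proof.
have h1 : `|'Re p| <= `|p| := (leif_normC_Re_Creal p).1.
have h2 : 'Re p <= `|'Re p| := real_ler_norm (Creal_Re p).
have : 'Re p * 2 <= `|p| * 2 by rewrite ler_pM2r ?ltr0n // (le_trans h2).
by rewrite ReE divfK ?pnatr_eq0 // mulrC.
Qed.

Lemma hnorm_triangle x y : hnorm ip (x + y) <= hnorm ip x + hnorm ip y.
Proof.
rewrite -(ler_pXn2r (_ : 0 < 2)%N) ?nnegrE ?addr_ge0 ?hnorm_ge0 //.
rewrite hnorm_sq -lecR -ipxx ipDl !ipDr (ipC x y) !ipxx.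
have h1 := ip_le_norm (ip x y).
have := CS x y; rewrite -lecR rmorphM /= -rabsE => hcs.
have h2 : ip x y + (ip x y)^*%R <= 2 * ((hnorm ip x)%:C * (hnorm ip y)%:C).
  by apply: (le_trans h1); rewrite ler_pM2l ?ltr0n.
have -> : ((hnorm ip x + hnorm ip y) ^+ 2)%:C = (nn x)%:C + (nn y)%:C +
   2 * ((hnorm ip x)%:C * (hnorm ip y)%:C).
  rewrite -!hnorm_sq !RC_sqr rmorphD /=.
  move: (hnorm ip x)%:C (hnorm ip y)%:C => u v; ring.
have e : (nn x)%:C + ip x y + ((ip x y)^*%R + (nn y)%:C) =
   (nn x)%:C + (nn y)%:C + (ip x y + (ip x y)^*%R).
  move: (nn x)%:C (nn y)%:C (ip x y) => u v w; ring.
by rewrite e lerD2l.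
Qed.

Lemma hnormB_sym x y : hnorm ip (x - y) = hnorm ip (y - x).
Proof. by rewrite /hnorm -opprB ipNl ipNr opprK. Qed.



Lemma lim_functional (f : H -> R[i]) (C : R) (u : nat -> H) (x : H) :
  (forall a b, f (a - b) = f a - f b) ->
  (forall z, rabs (f z) <= C * hnorm ip z) ->
  seq_cvg_to ip u x -> (forall n, f (u n) = 0) -> f x = 0.
Proof.
move=> fB fC cv f0.
apply: rabs0.
set r := rabs (f x).
have [rp|] := ltrP 0 r; last by move=> h; apply/eqP; rewrite eq_le h rabs_ge0.
set C' : R := `|C| + 1.
have C'0 : 0 < C' by rewrite ltr_wpDl.
have [N hN] := cv (r / C') (divr_gt0 rp C'0).
have := hN N (leqnn N).
rewrite hnormB_sym => hl.
have e : f x = f (x - u N) by rewrite fB f0 subr0.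
have : r <= C' * hnorm ip (x - u N).
  rewrite /r e; apply: (le_trans (fC _)); apply: ler_wpM2r; first exact: hnorm_ge0.
  by rewrite (le_trans (ler_norm _)) // lerDl.
rewrite -(ltr_pM2l C'0) mulrCA mulfV ?gt_eqF // mulr1 in hl.
move=> h; have := lt_le_trans hl h.
by rewrite ltxx.
Qed.


Lemma nnE x : nn x = complex.Re (ip x x). Proof. by []. Qed.

Lemma parallelogram a b : nn (a + b) + nn (a - b) = 2 * nn a + 2 * nn b.
Proof.
apply: complexI; rewrite !rmorphD !rmorphM /= -!ipxx.
rewrite !ipDl !ipNl !ipDr !ipNr.
have -> : (2 : R)%:C = 2 by rewrite rmorph_nat.
move: (ip a a) (ip a b) (ip b a) (ip b b) => p q r s; ring.
Qed.

Lemma nnZ2 z : nn (2 *: z) = 4 * nn z.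
Proof.
apply: complexI; rewrite rmorphM /= -!ipxx ipZl ipZr rmorph_nat rmorph_nat.
rewrite mulrA; congr (_ * _); by rewrite -natrM.
Qed.

Lemma nnB_sym a b : nn (a - b) = nn (b - a).
Proof. by rewrite /nn -opprB ipNl ipNr opprK. Qed.

Lemma proj_exists (M : H -> Prop) : closed_subspace ip M -> complete_space ip ->
  forall x, exists p, M p /\ forall m, M m -> ip (x - p) m = 0.
Proof.
case=> M0 MD MZ Mlim hc x.
have MN : forall a, M a -> M (- a) by move=> a Ma; rewrite -scaleN1r; apply: MZ.
pose E : set R := fun r => exists m, M m /\ r = nn (x - m).
have hE : has_inf E.
  split; first by exists (nn (x - 0)); exists 0.
  by exists 0 => r [m [_ ->]]; exact: nn_ge0.
set d := inf E.
have dle : forall m, M m -> d <= nn (x - m).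
  by move=> m Mm; apply: (ge_inf hE.2); exists m.
have ex : forall n : nat, exists m, M m /\ nn (x - m) < d + (n.+1%:R)^-1.
  move=> n.
  have hpos : 0 < (n.+1%:R : R)^-1 by rewrite invr_gt0 ltr0n.
  have [r [m [Mm ->]] hr] := inf_adherent hpos hE.
  by exists m.
have [ms hms] := choice ex.
have cbound : forall n k, nn (ms n - ms k) <= 2 * (n.+1%:R)^-1 + 2 * (k.+1%:R)^-1.
  move=> n k.
  have [Mn hn] := hms n; have [Mk hk] := hms k.
  set w := (2:R[i])^-1 *: (ms n + ms k).
  have Mw : M w by apply: MZ; apply: MD.
  have hw := dle w Mw.
  have e1 : (x - ms n) + (x - ms k) = 2 *: (x - w).
    rewrite /w scalerBr scalerA mulfV ?pnatr_eq0 // scale1r scaler_nat mulr2n.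
    by rewrite opprD addrACA.
  have e2 : (x - ms n) - (x - ms k) = ms k - ms n.
    by rewrite opprB addrC addrA subrK.
  have := parallelogram (x - ms n) (x - ms k).
  rewrite e1 e2 nnZ2 (nnB_sym (ms k)).
  move: hw hn hk; rewrite -/d.
  move: (nn (x - w)) (nn (ms n - ms k)) (nn (x - ms n)) (nn (x - ms k)) => A B C D.
  move: (n.+1%:R : R)^-1 (k.+1%:R : R)^-1 => a b.
  lra.
have inv_mono : forall n N : nat, (N <= n)%N -> (n.+1%:R : R)^-1 <= (N.+1%:R)^-1.
  by move=> n N hnN; rewrite lef_pV2 ?posrE ?ltr0n // ler_nat ltnS.
have inv_small : forall eta : R, 0 < eta -> exists N : nat, forall n, (N <= n)%N ->
    (n.+1%:R : R)^-1 < eta.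
  move=> eta eta0.
  have hb := archi_boundP (_ : 0 <= eta^-1).
  exists (Num.Def.archi_bound eta^-1) => n hn.
  rewrite -[eta]invrK ltf_pV2 ?posrE ?invr_gt0 ?ltr0n //.
  apply: (lt_le_trans (hb _)); first by rewrite invr_ge0 ltW.
  by rewrite ler_nat; apply: (leq_trans hn).
have hcau : cauchy_seq ip ms.
  move=> e e0.
  have e20 : 0 < e ^+ 2 / 4 by rewrite divr_gt0 ?exprn_gt0 // ltr0n.
  have [N hN] := inv_small _ e20.
  exists N => m n hm hn.
  rewrite -(ltr_pXn2r (_ : 0 < 2)%N) ?nnegrE ?hnorm_ge0 ?ltW // hnorm_sq.
  have := cbound m n; have := hN m hm; have := hN n hn.
  move: (nn (ms m - ms n)) (m.+1%:R : R)^-1 (n.+1%:R : R)^-1 => A a b.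
  move: (e ^+ 2) => E2; lra.
have [p hp] := hc ms hcau.
have Mp : M p := Mlim ms p (fun n => proj1 (hms n)) hp.
have hmin : forall m, M m -> nn (x - p) <= nn (x - m).
  move=> m Mm.
  rewrite -!hnorm_sq; apply: lerXn2r; rewrite ?nnegrE ?hnorm_ge0 //.
  set h := hnorm ip (x - m).
  rewrite leNgt; apply/negP => hlt.
  set g := hnorm ip (x - p) - h.
  have g0 : 0 < g by rewrite subr_gt0.
  have [N1 hN1] := hp (g / 2) (divr_gt0 g0 (ltr0Sn _ 1)).
  have hh0 : 0 <= h := hnorm_ge0 _.
  have eta0 : 0 < h * g + g ^+ 2 / 4.
    apply: ltr_wpDl; first by rewrite mulr_ge0 // ltW.
    by rewrite divr_gt0 ?exprn_gt0 // ltr0n.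
  have [N2 hN2] := inv_small _ eta0.
  set n := maxn N1 N2.
  have h1 := hN1 n (leq_maxl _ _).
  have [_ h2] := hms n.
  have h3 := dle m Mm.
  have h4 := hN2 n (leq_maxr _ _).
  have h5 : hnorm ip (x - ms n) < h + g / 2.
    rewrite -(ltr_pXn2r (_ : 0 < 2)%N) ?nnegrE ?hnorm_ge0 ?addr_ge0 ?divr_ge0 ?(ltW g0) //.
    rewrite hnorm_sq.
    have hq : h ^+ 2 = nn (x - m) by rewrite /h hnorm_sq.
    have hexp : (h + g / 2) ^+ 2 = h ^+ 2 + (h * g + g ^+ 2 / 4).
      by rewrite sqrrD expr_div_n; field.
    rewrite hexp hq.
    move: h2 h3 h4; move: (h * g + g ^+ 2 / 4) (nn (x - ms n)) (nn (x - m)) => a b c.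
    move: (n.+1%:R : R)^-1 => t; lra.
  have h6 := hnorm_triangle (x - ms n) (ms n - p).
  have e : x - ms n + (ms n - p) = x - p by rewrite addrA subrK.
  rewrite e in h6.
  move: h1 h5 h6; rewrite /g.
  move: (hnorm ip (x - p)) (hnorm ip (x - ms n)) (hnorm ip (ms n - p)) => a b c.
  lra.
exists p; split => // m Mm.
apply: (variational ipD ipC ippos) => c.
have : M (p + c *: m) by apply: MD => //; apply: MZ.
move/hmin; rewrite (_ : x - (p + c *: m) = x - p - c *: m) //.
by rewrite opprD addrA.
Qed.



Lemma Re_le_rabs z : complex.Re z <= rabs z.
Proof.
rewrite /rabs normc_def /=.
apply: (le_trans (ler_norm _)); rewrite -sqrtr_sqr ler_sqrt ?lerDl ?sqr_ge0 //.
by rewrite addr_ge0 ?sqr_ge0.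
Qed.

Lemma ip_ext a b : (forall x, ip x a = ip x b) -> a = b.
Proof.
move=> h; apply/eqP; rewrite -subr_eq0; apply/eqP; apply: ipdef.
by rewrite ipBr h subrr.
Qed.

Lemma lin_facts (f : H -> R[i]) :
  (forall a x y, f (a *: x + y) = a * f x + f y) ->
  [/\ f 0 = 0, forall x y, f (x + y) = f x + f y, forall a x, f (a *: x) = a * f x
    & forall x y, f (x - y) = f x - f y].
Proof.
move=> fl.
have f0 : f 0 = 0.
  have h := fl 1 0 0; rewrite scaler0 addr0 mul1r in h.
  by apply: (@addrI _ (f 0)); rewrite addr0 -h.
have fD : forall x y, f (x + y) = f x + f y.
  by move=> x y; have := fl 1 x y; rewrite scale1r mul1r.
have fZ : forall a x, f (a *: x) = a * f x.
  by move=> a x; have := fl a x 0; rewrite addr0 f0 addr0.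
split => // x y; by rewrite fD -scaleN1r fZ mulN1r.
Qed.

Lemma riesz (f : H -> R[i]) (C : R) :
  (forall a x y, f (a *: x + y) = a * f x + f y) ->
  (forall z, rabs (f z) <= C * hnorm ip z) -> complete_space ip ->
  exists w, forall x, f x = ip x w.
Proof.
move=> fl fC hc.
have [f0 fD fZ fB] := lin_facts fl.
have hK : closed_subspace ip (fun z => f z = 0).
  split => //.
  - by move=> x y hx hy; rewrite fD hx hy addr0.
  - by move=> a x hx; rewrite fZ hx mulr0.
  - by move=> u x hu cv; apply: (lim_functional fB fC cv hu).
case: (pselect (exists w, f w != 0)); last first.
  move=> hn; exists 0 => x; rewrite ip0r.
  by case: (eqVneq (f x) 0) => // h; exfalso; apply: hn; exists x.
case=> w fw.
have [q [Kq hq]] := proj_exists hK hc w.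
set w0 := w - q.
have fw0 : f w0 != 0 by rewrite /w0 fB Kq subr0.
have w0n : ip w0 w0 != 0.
  apply/eqP => /ipdef h; move: fw0; by rewrite h f0 eqxx.
exists (((f w0) / ip w0 w0)^*%R *: w0) => x.
set c := f x / f w0.
have Kk : f (x - c *: w0) = 0 by rewrite fB fZ /c divfK // subrr.
have h1 := hq _ Kk.
rewrite -/w0 ipC ipBl ipZl in h1.
have h2 : ip x w0 = c * ip w0 w0.
  apply/eqP; rewrite -subr_eq0 -conjC_eq0; apply/eqP; exact: h1.
rewrite ipZr conjCK h2 /c; field.
by apply/andP; split.
Qed.

Lemma adjoint_exists (T : H -> H) : bounded_op ip T -> complete_space ip ->
  exists Ts, bounded_op ip Ts /\ is_adjoint ip T Ts.
Proof.
case=> Tlin [M hM] hc.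
have ex : forall y, exists w, forall x, ip (T x) y = ip x w.
  move=> y; apply: (@riesz (fun x => ip (T x) y) (M * hnorm ip y)) => //.
    by move=> a x x'; rewrite Tlin ipDl ipZl.
  move=> z; apply: (le_trans (CS _ _)).
  rewrite mulrAC; apply: ler_wpM2r; [exact: hnorm_ge0 | exact: hM].
have [Ts hTs] := choice ex.
exists Ts; split => //; split.
  move=> a y y'; apply: ip_ext => x.
  by rewrite -hTs ipDr ipZr ipDr ipZr -!hTs.
exists `|M| => y.
have hx := hTs y (Ts y).
set t := hnorm ip (Ts y).
have t0 : 0 <= t := hnorm_ge0 _.
have ht : t ^+ 2 <= `|M| * t * hnorm ip y.
  rewrite /t hnorm_sq /nn -hx; apply: (le_trans (Re_le_rabs _)).
  apply: (le_trans (CS _ _)); rewrite -/t.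
  apply: ler_wpM2r; first exact: hnorm_ge0.
  apply: (le_trans (hM _)); apply: ler_wpM2r => //; exact: ler_norm.
have hy0 := hnorm_ge0 y.
have hM0 : 0 <= `|M| := normr_ge0 _.
move: ht t0 hy0 hM0; move: t (hnorm ip y) `|M| => a b k ht a0 b0 k0.
rewrite mulrAC expr2 in ht.
case: (eqVneq a 0) => [->|an0]; first by rewrite mulr_ge0.
have ap : 0 < a by rewrite lt_def an0 a0.
by rewrite -(ler_pM2r ap).
Qed.


Lemma linH_facts (T : H -> H) :
  (forall (a : R[i]) x y, T (a *: x + y) = a *: T x + T y) ->
  [/\ T 0 = 0, forall x y, T (x + y) = T x + T y, forall a x, T (a *: x) = a *: T x
    & forall x y, T (x - y) = T x - T y].
Proof.
move=> fl.
have f0 : T 0 = 0.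
  have h := fl 1 0 0; rewrite scaler0 addr0 scale1r in h.
  by apply: (@addrI _ (T 0)); rewrite addr0 -h.
have fD : forall x y, T (x + y) = T x + T y.
  by move=> x y; have := fl 1 x y; rewrite !scale1r.
have fZ : forall a x, T (a *: x) = a *: T x.
  by move=> a x; have := fl a x 0; rewrite addr0 f0 addr0.
split => // x y; by rewrite fD -scaleN1r fZ scaleN1r.
Qed.

Lemma addZ_sub (a : R[i]) (x y u v : H) :
  (a *: x + y) - (a *: u + v) = a *: (x - u) + (y - v).
Proof. by rewrite scalerBr opprD addrACA. Qed.

Lemma sqrtRe_le (z w : R[i]) : 0 <= z -> 0 <= w -> z <= w ->
  Num.sqrt (complex.Re z) <= Num.sqrt (complex.Re w).
Proof.
move=> z0 w0 zw; rewrite ler_sqrt.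
  by rewrite -lecR -Cge0 // -Cge0.
by rewrite -realC_ge0 -Cge0.
Qed.

Lemma sqrtRe_le_inv (z w : R[i]) : 0 <= w ->
  Num.sqrt (complex.Re z) <= Num.sqrt (complex.Re w) -> complex.Re z <= complex.Re w.
Proof. by move=> w0; rewrite ler_sqrt // -realC_ge0 -Cge0. Qed.

Lemma hnormN z : hnorm ip (- z) = hnorm ip z.
Proof. by rewrite /hnorm ipNl ipNr opprK. Qed.

Lemma A_selfadj (A : H -> H) : positive_op ip A -> forall x y, ip (A x) y = ip x (A y).
Proof.
case=> [[Alin _] Apos] x y.
have [A0 AD AZ AB] := linH_facts Alin.
have Dz : forall z, ip (A z) z = ip z (A z).
  by move=> z; rewrite (ipC (A z) z) conj_ge0.
set P := ip (A x) y - ip x (A y).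
set Q := ip (A y) x - ip y (A x).
have key : forall c : R[i], c^*%R * P + c * Q = 0.
  move=> c; have := Dz (x + c *: y).
  rewrite AD AZ !ipDl !ipDr !ipZl !ipZr (Dz x) (Dz y) /P /Q.
  move: (ip x (A x)) (ip (A x) y) (ip (A y) x) (ip y (A y)) => a b d e.
  move: (ip x (A y)) (ip y (A x)) => f g.
  move/eqP; rewrite -subr_eq0 => /eqP h.
  apply: (etrans _ h); ring.
have k1 := key 1; rewrite conjC1 !mul1r in k1.
have k2 := key 'i; rewrite conjCi mulNr in k2.
have : 'i * (Q - P) = 0 by rewrite mulrBr addrC.
move/eqP; rewrite mulf_eq0 (negbTE (neq0Ci _)) /= subr_eq0 => /eqP hQP.
rewrite hQP -mulr2n in k1.
apply/eqP; rewrite -subr_eq0; apply/eqP.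
by move/eqP: k1; rewrite mulrn_eq0 /= => /eqP.
Qed.


Lemma main_sec (A : H -> H) (S : H -> Prop) (hc : complete_space ip)
  (hA : positive_op ip A) (hS : closed_subspace ip S) :
  compatible ip A S <-> exists T : H -> H, A_projection ip A S T.
Proof.
have Aself := A_selfadj hA.
case: (hA) => [[Alin _] Apos].
have [A0 AD AZ AB] := linH_facts Alin.
case: (hS) => S0 SD SZ Slim.
have SN : forall a, S a -> S (- a) by move=> a Sa; rewrite -scaleN1r; apply: SZ.
have SB : forall a b, S a -> S b -> S (a - b) by move=> a b Sa Sb; apply: SD => //; exact: SN.
split.
  case=> Q [Qb QQ QR [Qs [Qsb Qadj AQ]]].
  have [Q0 QD QZ QB] := linH_facts (proj1 Qb).
  exists Q; split => //.
    by move=> y; apply/QR; exists y.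
  move=> y s Ss.
  have Qs_fix : Q s = s by have [w <-] := (QR s).1 Ss; rewrite QQ.
  set u := y - Q y; set v := Q y - s.
  have Qu : Q u = 0 by rewrite /u QB QQ subrr.
  have Qv : Q v = v by rewrite /v QB QQ Qs_fix.
  have c1 : ip (A u) v = 0.
    by rewrite -Qv ipC Qadj -AQ Qu A0 ip0r conjC0.
  have c2 : ip (A v) u = 0 by rewrite Aself ipC c1 conjC0.
  have -> : y - s = u + v by rewrite /u /v addrA subrK.
  clearbody u v.
  rewrite /A_seminorm; apply: sqrtRe_le; rewrite ?Apos //.
  rewrite AD !ipDl !ipDr c1 c2 addr0 add0r lerDl; exact: Apos.
move=> [T [Tb TS Tmin]].
have [Tlin [MT hMT]] := Tb.
have [T0 TD TZ TB] := linH_facts Tlin.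
pose K0 k := forall s, S s -> ip (A s) k = 0.
have BD : forall (a : R[i]) (x y z : H), ip (A (a *: x + y)) z = a * ip (A x) z + ip (A y) z.
  by move=> a x y' z; rewrite Alin ipD.
have BC : forall x y, ip (A y) x = (ip (A x) y)^*%R.
  by move=> x y'; rewrite Aself ipC.
have hK0y : forall y, K0 (y - T y).
  move=> y s Ss.
  suff h : ip (A (y - T y)) s = 0 by rewrite BC h conjC0.
  apply: (variational BD BC Apos) => c.
  have := Tmin y (T y + c *: s) (SD _ _ (TS y) (SZ c _ Ss)).
  rewrite (_ : y - (T y + c *: s) = y - T y - c *: s); last by rewrite opprD addrA.
  by apply: sqrtRe_le_inv; exact: Apos.
pose N x := S x /\ K0 x.
have hN : closed_subspace ip N.
  split.
  - by split => // s _; rewrite ip0r.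
  - move=> x y [Sx Kx] [Sy Ky]; split; first exact: SD.
    by move=> s Ss; rewrite ipDr Kx // Ky // addr0.
  - move=> a x [Sx Kx]; split; first exact: SZ.
    by move=> s Ss; rewrite ipZr Kx // mulr0.
  - move=> u x hu cv; split; first by apply: (Slim u) => // n; case: (hu n).
    move=> s Ss.
    have h : ip x (A s) = 0.
      apply: (@lim_functional (fun z => ip z (A s)) (hnorm ip (A s)) u x) => //.
      - by move=> a b; rewrite ipBl.
      - by move=> z; rewrite mulrC; exact: CS.
      - by move=> n; rewrite ipC (proj2 (hu n)) // conjC0.
    by rewrite ipC h conjC0.
have [P hP] := choice (proj_exists hN hc).
have Puniq : forall x p, N p -> (forall n, N n -> ip (x - p) n = 0) -> p = P x.
  move=> x p Np hp; have [NP hPx] := hP x.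
  apply/eqP; rewrite -subr_eq0; apply/eqP; apply: ipdef.
  have Nd : N (p - P x).
    case: Np => Sp Kp; case: NP => SP KP; split; first exact: SB.
    by move=> s Ss; rewrite ipBr Kp // KP // subrr.
  have e : p - P x = (x - P x) - (x - p) by rewrite opprB [RHS]addrC addrA subrK.
  by rewrite {1}e ipBl hPx ?hp ?subrr.
have Plin : forall (a : R[i]) x y, P (a *: x + y) = a *: P x + P y.
  move=> a x y; symmetry; apply: Puniq.
    have [[SPx KPx] _] := hP x; have [[SPy KPy] _] := hP y.
    split; first by apply: SD => //; exact: SZ.
    by move=> s Ss; rewrite ipDr ipZr KPx // KPy // mulr0 addr0.
  move=> n Nn; rewrite addZ_sub ipDl ipZl (proj2 (hP x)) // (proj2 (hP y)) //.
  by rewrite mulr0 addr0.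
have Pbound : forall x, hnorm ip (P x) <= hnorm ip x.
  move=> x; have [NPx hPx] := hP x.
  have o1 : ip (x - P x) (P x) = 0 by exact: hPx.
  have o2 : ip (P x) (x - P x) = 0 by rewrite ipC o1 conjC0.
  rewrite /hnorm; apply: sqrtRe_le; rewrite ?ippos //.
  have ex : x = P x + (x - P x) by rewrite addrC subrK.
  rewrite [in X in _ <= X]ex.
  move: o1 o2; set y := x - P x; clearbody y => o1 o2.
  rewrite ipDl !ipDr o1 o2 addr0 add0r lerDl; exact: ippos.
pose Q x := T x + P (x - T x).
have Qlin : forall (a : R[i]) x y, Q (a *: x + y) = a *: Q x + Q y.
  move=> a x y; rewrite /Q Tlin addZ_sub Plin scalerDr.
  by rewrite addrACA.
have Qb : bounded_op ip Q.
  split => //; exists (2 * MT + 1) => x.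
  rewrite /Q; apply: (le_trans (hnorm_triangle _ _)).
  apply: (le_trans (lerD (lexx _) (Pbound _))).
  have h1 := hnorm_triangle x (- T x); rewrite hnormN in h1.
  have h2 := hMT x.
  move: h1 h2; move: (hnorm ip (T x)) (hnorm ip x) (hnorm ip (x - T x)) => a b c.
  lra.
have SQ : forall x, S (Q x).
  by move=> x; apply: SD => //; case: (proj1 (hP (x - T x))).
have Qres : forall y, y - Q y = (y - T y) - P (y - T y).
  by move=> y; rewrite /Q opprD addrA.
have hKk : forall y, K0 (y - Q y).
  move=> y s Ss; rewrite Qres ipBr hK0y //.
  by case: (proj1 (hP (y - T y))) => _ ->; rewrite ?subrr.
have hNk : forall y n, N n -> ip (y - Q y) n = 0.
  by move=> y n Nn; rewrite Qres; exact: (proj2 (hP (y - T y))).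
have Qfix : forall s, S s -> Q s = s.
  move=> s Ss; apply/eqP; rewrite eq_sym -subr_eq0; apply/eqP; apply: ipdef.
  by apply: hNk; split; [exact: SB | exact: hKk].
have [Qs [Qsb Qadj]] := adjoint_exists Qb hc.
exists Q; split => //.
- by move=> x; apply: Qfix.
- move=> y; split; first by move=> Sy; exists y; apply: Qfix.
  by case=> x <-.
exists Qs; split => // x.
apply: ip_ext => z.
rewrite -Qadj -Aself.
have e1 : ip (A z) (Q x) = ip (A (Q z)) (Q x) + ip (A (z - Q z)) (Q x).
  by rewrite -ipDl -AD [Q z + _]addrC subrK.
have e2 : ip (A (z - Q z)) (Q x) = 0.
  by rewrite Aself ipC hKk ?conjC0.
have e3 : ip (Q z) (A x) = ip (A (Q z)) (Q x) + ip (A (Q z)) (x - Q x).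
  by rewrite -ipDr [Q x + _]addrC subrK Aself.
have e4 : ip (A (Q z)) (x - Q x) = 0 by rewrite hKk.
by rewrite e1 e3 e2 e4.
Qed.

End IP.

Unset Implicit Arguments.
Theorem mainTheorem6 (R : realType) (H : lmodType R[i]) (ip : H -> H -> R[i])
  (hH : separable_hilbert_space ip) (A : H -> H) (S : H -> Prop)
  (hA : positive_op ip A) (hS : closed_subspace ip S) :
  compatible ip A S <-> exists T : H -> H, A_projection ip A S T.
Proof.
case: hH => hip hc _.
exact: main_sec hip A S hc hA hS.
Qed.
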